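(* Let $P\in\mathfrak N^{LS}_2$ with $h_P\ge2$ and let $r:P\to R$ be a retraction such that $R(0)$ is a 2-element antichain. (1) $R(0)\subseteq P(0)\cup P(1)$ and $R(0)\cap P(0)\neq\emptyset$; moreover, if $R(0)\cap P(1)\neq\emptyset$, then $h_R\ge1$ and $R(1\to h_R)$ is a retract of $P(2\to h_P)$. (2) There is a retraction $s:P\to S$ with $S\cong R$, $S(0)\subseteq P(0)$, $s[P(0)]=S(0)$, and $s^{-1}(p)=\{p\}$ for some $p\in S(0)$.
   Context: All posets are finite; $h_P$ is the height; level sets $P(0)=\min P$, $P(k+1)=\min(P\setminus\bigcup_{i\le k}P(i))$; $P(k\to\ell)=\bigcup_{i=k}^\ell P(i)$ as induced subposet. Level sets $R(\ell)$ and $R(k\to\ell)$ of a retract $R$ refer to $R$'s own levels. $A<B$ means $a<b$ for all $a\in A,b\in B$. A retraction $r:P\to R$ is an idempotent order-preserving self-map with image $R$. A section of width three is a poset $P$ of height $h_P\ge1$ with carrier $\{c_{k,j}:k\in[0,h_P],j\in\{0,1,2\}\}$ such that: $c_{0,j}<\dots<c_{h_P,j}$ for each $j$; each $\{c_{k,0},c_{k,1},c_{k,2}\}$ is an antichain; $c_{k,i}<c_{\ell,j}\Rightarrow c_{k,i+1}<c_{\ell,j+1}$ (indices mod 3); and for no $k$ is $P(k)<P(k+1)$. It is nice if for all $x<y$: $\{z:z>x\}\not\subseteq\{z:z\ge y\}$ and $\{z:z<y\}\not\subseteq\{z:z\le x\}$. $\mathfrak N_2$ is the class of nice sections of width three of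 height $\ge2$ with horizon 2 (i.e. $P(k)<P(\ell)$ whenever $\ell\ge k+2$). $\mathfrak N^{LS}_2=\{P(0\to h_P-1):P\in\mathfrak N_2\}$ (lower segments). Each consecutive level pair $P(k)\cup P(k+1)$ of such posets is a 6-crown ($x_0<y_0>x_1<y_1>x_2<y_2>x_0$, no other comparabilities) or of type $3C$ (three disjoint 2-chains), and $P(0)\cup P(1)$ is a 6-crown for $P\in\mathfrak N^{LS}_2$ with $h_P\ge1$. *)

(* Defs.v *)
(* Posets are finite partial orders: a finPOrderType T.
   Subposets are subsets A : {set T} carrying the induced order. *)
From mathcomp Require Import all_boot all_order.
Set Implicit Arguments. Unset Strict Implicit. Unset Printing Implicit Defensive.
Import Order.TTheory.
Local Open Scope order_scope.

Section Defs.
Context {d : Order.disp_t} {T : finPOrderType d}.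
Implicit Types (A B : {set T}).

Definition minimals A : {set T} := [set x in A | [forall y in A, ~~ (y < x)]].

Fixpoint rest A (k : nat) : {set T} :=
  match k with
  | 0 => A
  | k'.+1 => rest A k' :\: minimals (rest A k')
  end.

(* level sets: A(0) = min A, A(k+1) = min (A \ U_{i<=k} A(i)) *)
Definition level A (k : nat) : {set T} := minimals (rest A k).

(* height: the largest index of a nonempty level (0 for the empty poset) *)
Definition height A : nat := (\max_(k < #|A|.+1 | level A k != set0) k)%N.

(* A(k -> l) = union of the levels k..l of A *)
Definition segment A (k l : nat) : {set T} :=
  \bigcup_(k <= i < l.+1) level A i.

Definition set_lt A B : Prop := forall a b, a \in A -> b \in B -> a < b.

Definition antichain A : Prop :=
  forall x y, x \in A -> y \in A -> x != y -> ~~ (x >=< y).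

Definition retraction_on A (r : T -> T) : Prop :=
  [/\ {in A, forall x, r x \in A},
      {in A &, forall x y, x <= y -> r x <= r y} &
      {in A, forall x, r (r x) = r x}].

Definition is_retract A B : Prop :=
  exists r : T -> T, retraction_on A r /\ B = r @: A.

Definition iso_sub A B : Prop :=
  exists f : T -> T,
    [/\ {in A &, injective f}, f @: A = B &
        {in A &, forall x y, (f x <= f y) = (x <= y)}].

(* The whole type T is a section of width three, with carrier
   c : 'I_(h+1) -> 'I_3 -> T (c k j = c_{k,j}) *)
Definition section3 (h : nat) (c : 'I_h.+1 -> 'I_3 -> T) : Prop :=
  [/\ (1 <= h)%N, height [set: T] = h,
      (forall t : T, exists k j, c k j = t) &
      (forall k j k' j', c k j = c k' j' -> k = k' /\ j = j')] /\
  [/\ (forall (k l : 'I_h.+1) (j : 'I_3), (k < l)%N -> c k j < c l j),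
      (forall (k : 'I_h.+1) (i j : 'I_3), i != j -> ~~ (c k i >=< c k j)),
      (forall (k l : 'I_h.+1) (i j : 'I_3),
          c k i < c l j -> c k (ordS i) < c l (ordS j)) &
      (forall k : nat, (k < h)%N ->
          ~ set_lt (level [set: T] k) (level [set: T] k.+1))].

Definition nice_whole : Prop :=
  forall x y : T, x < y ->
    (exists z, x < z /\ ~~ (y <= z)) /\ (exists z, z < y /\ ~~ (z <= x)).

Definition horizon2_whole : Prop :=
  forall k l : nat, (k.+2 <= l)%N -> set_lt (level [set: T] k) (level [set: T] l).

Definition in_N2 : Prop :=
  exists h (c : 'I_h.+1 -> 'I_3 -> T),
    [/\ section3 c, (2 <= h)%N, nice_whole & horizon2_whole].

Definition lower_segment : {set T} :=
  segment [set: T] 0 (height [set: T]).-1.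

End Defs.

(* Main.v *)
Require Import Defs.
From mathcomp Require Import all_boot all_order.
From Stdlib Require Import Setoid.
Set Implicit Arguments. Unset Strict Implicit. Unset Printing Implicit Defensive.
Import Order.TTheory.
Local Open Scope order_scope.

Section Gen.
Context {d : Order.disp_t} {T : finPOrderType d}.
Implicit Types (A B : {set T}).

Lemma minimalsP A x :
  reflect (x \in A /\ forall y, y \in A -> ~~ (y < x)) (x \in minimals A).
Proof.
rewrite /minimals inE; apply: (iffP andP) => [[xA /forall_inP H]|[xA H]].
  by split.
by split => //; apply/forall_inP.
Qed.

Lemma minimals_sub A : minimals A \subset A.
Proof. by apply/subsetP => x /minimalsP[]. Qed.

Lemma min_le A a y : a \in minimals A -> y \in A -> y <= a -> y = a.
Proof.
move=> /minimalsP[_ H] yA; rewrite le_eqVlt => /orP[/eqP//|lt].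
by move: (H y yA); rewrite lt.
Qed.

Lemma min_nlt A a y : a \in minimals A -> y \in A -> ~~ (y < a).
Proof. by move=> /minimalsP[_ H] /H. Qed.

Lemma exists_below A x : x \in A -> exists2 m, m \in minimals A & m <= x.
Proof.
move=> xA; move: {2}#|_| (leqnn #|[set y in A | y < x]|) => n.
elim: n x xA => [|n IH] x xA hn;
  (case: (boolP (x \in minimals A)) => [xm|]; first by exists x);
  rewrite /minimals inE xA /= negb_forall_in => /existsP[y /andP[yA]];
  rewrite negbK => yx;
  (have lt : (#|[set z in A | (z < y)%O]| < #|[set z in A | (z < x)%O]|)%N by
    apply: proper_card; apply/properP; split;
      [apply/subsetP => z; rewrite !inE => /andP[-> zy]; exact: Order.POrderTheory.lt_trans zy yx
      | exists y; rewrite !inE ?yA ?yx ?ltxx //]).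
  by have := leq_trans lt hn.
have [m mA my] := IH y yA (leq_trans (leq_trans lt hn) (leqnn _)).
by exists m => //; apply: Order.POrderTheory.le_trans my (ltW yx).
Qed.

Lemma rest_sub A k : rest A k \subset A.
Proof.
elim: k => [|k IH] /=; first exact: subxx.
by apply: subset_trans IH; apply: subsetDl.
Qed.

Lemma rest_decr A i j : (i <= j)%N -> rest A j \subset rest A i.
Proof.
move=> /subnK <-; elim: (j - i)%N => [|n IH] /=; first exact: subxx.
by apply: subset_trans IH; apply: subsetDl.
Qed.

Lemma level_rest A k : level A k \subset rest A k.
Proof. exact: minimals_sub. Qed.

Lemma level_sub A k : level A k \subset A.
Proof. exact: subset_trans (level_rest A k) (rest_sub A k). Qed.

Lemma in_level A k x : x \in level A k -> x \in A.
Proof. by move/(subsetP (level_sub A k)). Qed.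

Lemma level_disj A i j x : x \in level A i -> x \in level A j -> i = j.
Proof.
wlog lij : i j / (i <= j)%N.
  move=> W xi xj; case: (leqP i j) => h; first exact: W.
  by apply/esym/W => //; apply: ltnW.
move=> xi xj; case: (ltngtP i j) => h //; last by rewrite leqNgt h in lij.
have := subsetP (rest_decr A h) x (subsetP (level_rest A j) x xj).
by rewrite /= inE xi.
Qed.

Lemma level_lt A i j x y :
  x \in level A i -> y \in level A j -> y < x -> (j < i)%N.
Proof.
move=> xi yj yx; rewrite ltnNge; apply/negP => h.
have yr := subsetP (rest_decr A h) y (subsetP (level_rest A j) y yj).
by move: (min_nlt xi yr); rewrite yx.
Qed.

Lemma level_same_nlt A k x y :
  x \in level A k -> y \in level A k -> ~~ (y < x).
Proof.
move=> xk yk; apply/negP => /(level_lt xk yk); by rewrite ltnn.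
Qed.

Lemma rest_card A k : (#|rest A k| <= #|A| - k)%N.
Proof.
elim: k => [|k IH] /=; first by rewrite subn0.
case: (set_0Vmem (rest A k)) => [->|[x xr]].
  by rewrite set0D cards0.
have [m mr _] := exists_below xr.
have : (#|rest A k :\: minimals (rest A k)| < #|rest A k|)%N.
  apply: proper_card; apply/properP; split; first exact: subsetDl.
  exists m; first exact: (subsetP (minimals_sub _)).
  by rewrite inE mr.
move=> lt; have := leq_trans lt IH; rewrite subnS; case: (#|A| - k)%N => //.
Qed.

Lemma in_some_level A x : x \in A -> exists2 k, (k < #|A|)%N & x \in level A k.
Proof.
move=> xA.
have H : forall k, x \in rest A k \/ exists2 i, (i < k)%N & x \in level A i.
  elim => [|k [xr|[i ik xi]]]; [by left| |by right; exists i => //; exact: ltnW].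
  case: (boolP (x \in level A k)) => xl; first by right; exists k.
  by left; rewrite /= inE xr /level xl.
case: (H #|A|) => [xr|//].
have := rest_card A #|A|; rewrite subnn leqn0 cards_eq0 => /eqP E.
by move: xr; rewrite E inE.
Qed.

Lemma level_height A k x : x \in level A k -> (k <= height A)%N.
Proof.
move=> xk; have [k' k'lt xk'] := in_some_level (in_level xk).
have E := level_disj xk xk'; subst k'.
have lt' : (k < #|A|.+1)%N by apply: ltnW.
apply: (@leq_bigmax_cond _ (fun i : 'I_#|A|.+1 => level A i != set0)
   (fun i => nat_of_ord i) (Ordinal lt')).
by apply/set0Pn; exists x.
Qed.

Lemma height_level A : (0 < height A)%N -> exists x, x \in level A (height A).
Proof.
rewrite /height.
case: (pickP (fun i : 'I_#|A|.+1 => level A i != set0)) => [i0 Hi0|H0].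
  rewrite (bigop.bigmax_eq_arg i0) //.
  case: arg_maxnP => //= i /set0Pn[x xi] _ _; by exists x.
by rewrite big_pred0.
Qed.

Lemma mem_bigU (s : seq nat) (F : nat -> {set T}) x :
  (x \in \big[@setU T/set0]_(i <- s) F i) = has (fun i => x \in F i) s.
Proof.
elim: s => [|i s IH]; first by rewrite big_nil inE.
by rewrite big_cons inE IH.
Qed.

Lemma in_segment A i j x :
  (x \in segment A i j) <-> exists k, [/\ (i <= k)%N, (k <= j)%N & x \in level A k].
Proof.
rewrite /segment mem_bigU; split.
  by case/hasP => k; rewrite mem_index_iota => /andP[h1 h2] xk; exists k.
case=> k [h1 h2 xk]; apply/hasP; exists k => //; rewrite mem_index_iota h1.
exact: h2.
Qed.

Lemma in_segment_h A i x :
  (x \in segment A i (height A)) <-> exists k, (i <= k)%N /\ x \in level A k.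
Proof.
rewrite in_segment; split; first by case=> k [? ? ?]; exists k.
by case=> k [h1 h2]; exists k; split => //; exact: level_height h2.
Qed.

Lemma seg1 A : segment A 1 (height A) = A :\: level A 0.
Proof.
apply/setP => x; rewrite inE; apply/idP/idP.
  move/in_segment_h => [k [h1 xk]]; rewrite (in_level xk) andbT.
  apply/negP => x0; move: (level_disj xk x0) h1 => ->; done.
case/andP => xn0 xA; apply/in_segment_h.
have [k _ xk] := in_some_level xA; exists k; split => //.
by case: k xk => // xk; rewrite xk in xn0.
Qed.

Lemma seg2 A : segment A 2 (height A) = A :\: (level A 0 :|: level A 1).
Proof.
apply/setP => x; rewrite in_setD in_setU; apply/idP/idP.
  move/in_segment_h => [k [h1 xk]]; rewrite (in_level xk) andbT.
  apply/negP => /orP[] x0; move: (level_disj xk x0) h1 => ->; done.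
case/andP => xn0 xA; apply/in_segment_h.
have [k _ xk] := in_some_level xA; exists k; split => //.
by case: k xk => [|[|k]] // xk; rewrite xk ?orbT in xn0.
Qed.

Lemma min_down A B (X : {set T}) (x : T) : X \subset B ->
  (forall x y, x \in A -> y \in B -> y < x -> y \in A) ->
  (x \in minimals (A :&: X)) = (x \in A) && (x \in minimals X).
Proof.
move=> XB dc.
case: (boolP (x \in A)) => xA /=; last first.
  by apply/negP => /minimalsP[]; rewrite inE (negbTE xA).
apply/minimalsP/minimalsP => [[xAX H]|[xX H]]; split.
- by move: xAX; rewrite inE => /andP[].
- move=> y yX; apply/negP => yx.
  have yA := dc _ _ xA (subsetP XB y yX) yx.
  by move: (H y); rewrite inE yA yX yx => /(_ isT).
- by rewrite inE xA.
- by move=> y; rewrite inE => /andP[_ /H].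
Qed.

Lemma rest_down A B k : A \subset B ->
  (forall x y, x \in A -> y \in B -> y < x -> y \in A) ->
  rest A k = A :&: rest B k.
Proof.
move=> AB dc; elim: k => [|k IH] /=; first by apply/esym/setIidPl.
apply/setP => x; rewrite IH !in_setD in_setI (min_down x (rest_sub B k) dc).
by rewrite in_setI in_setD; case: (x \in A); case: (x \in rest B k); case: (x \in minimals _).
Qed.

Lemma level_down A B k : A \subset B ->
  (forall x y, x \in A -> y \in B -> y < x -> y \in A) ->
  level A k = A :&: level B k.
Proof.
move=> AB dc; rewrite /level (rest_down k AB dc).
by apply/setP => x; rewrite in_setI (min_down x (rest_sub B k) dc).
Qed.

End Gen.
Set Implicit Arguments. Unset Strict Implicit. Unset Printing Implicit Defensive.
Import Order.TTheory.
Local Open Scope order_scope.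

Lemma I3 (i j i' j' : 'I_3) : i != j -> i' != j' -> j != j' -> [|| i == j', i' == j | i == i'].
Proof.
by case: i => [[|[|[|?]]] ?] //; case: j => [[|[|[|?]]] ?] //;
  case: i' => [[|[|[|?]]] ?] //; case: j' => [[|[|[|?]]] ?].
Qed.

Section N2.
Context {d : Order.disp_t} {T : finPOrderType d}.
Variables (h : nat) (c : 'I_h.+1 -> 'I_3 -> T).
Hypotheses (surj : forall t, exists k j, c k j = t)
  (inj : forall k j k' j', c k j = c k' j' -> k = k' /\ j = j')
  (chain : forall (k l : 'I_h.+1) j, (k < l)%N -> c k j < c l j)
  (anti : forall k i j, i != j -> ~~ (c k i >=< c k j)).

Lemma row_nlt k i j : ~~ (c k i < c k j).
Proof.
apply/negP => lt; case: (eqVneq i j) => [eij|nij].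
  by subst j; rewrite ltxx in lt.
by move: (anti k nij); rewrite (lt_comparable lt).
Qed.

Lemma idx_lt k i l j : c k i < c l j -> (k < l)%N.
Proof.
move=> lt; rewrite ltnNge; apply/negP => lk.
case: (ltngtP l k) lk => // [lk|ek] _.
  by move: (row_nlt l i j); rewrite (lt_trans (chain i lk) lt).
have ekl : l = k by apply: val_inj.
by subst l; move: (row_nlt k i j); rewrite lt.
Qed.

Lemma rest_char k : forall x,
  x \in rest [set: T] k <-> exists (k' : 'I_h.+1) (j : 'I_3), (k <= k')%N /\ x = c k' j.
Proof.
elim: k => [|k IH] x.
  split=> [_|]; last by rewrite /= inE.
  by have [k' [j E]] := surj x; exists k', j.
rewrite /= in_setD; split.
  case/andP => xnm xr; have [k' [j [kk' E]]] := (IH x).1 xr.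
  exists k', j; split => //; rewrite ltn_neqAle kk' andbT.
  apply/negP => /eqP ek; apply: (negP xnm); apply/minimalsP; split => // y yr.
  have [k'' [i [kk'' Ey]]] := (IH y).1 yr; subst x y; apply/negP => /idx_lt.
  by rewrite -ek ltnNge kk''.
case=> [k' [j [kk' E]]]; subst x.
have xr : c k' j \in rest [set: T] k by apply/(IH _).2; exists k', j; split => //; exact: ltnW.
rewrite xr andbT; apply/negP => /minimalsP[_ H].
have kh : (k < h.+1)%N by apply: ltn_trans kk' (ltn_ord k').
have yr : c (Ordinal kh) j \in rest [set: T] k by apply/(IH _).2; exists (Ordinal kh), j.
by move: (H _ yr); rewrite chain.
Qed.

Lemma level_char k x :
  x \in level [set: T] k <-> exists (k' : 'I_h.+1) (j : 'I_3), (k' : nat) = k /\ x = c k' j.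
Proof.
split.
  move/minimalsP => [xr H]; have [k' [j [kk' E]]] := (rest_char k x).1 xr.
  exists k', j; split => //; apply/eqP; rewrite eqn_leq kk' andbT leqNgt.
  apply/negP => lt.
  have kh : (k < h.+1)%N by apply: ltn_trans lt (ltn_ord k').
  have yr : c (Ordinal kh) j \in rest [set: T] k by apply/(rest_char _ _).2; exists (Ordinal kh), j.
  by move: (H _ yr); rewrite E chain.
case=> [k' [j [kk' E]]]; subst x; apply/minimalsP; split.
  by apply/(rest_char _ _).2; exists k', j; rewrite kk'.
move=> y yr; have [k'' [i [kk'' Ey]]] := (rest_char k y).1 yr; subst y.
by apply/negP => /idx_lt; rewrite kk' ltnNge kk''.
Qed.

Lemma card_L0 : #|level [set: T] 0| = 3%N.
Proof.
have -> : level [set: T] 0 = [set c ord0 j | j in [set: 'I_3]].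
  apply/setP => x; apply/idP/imsetP.
    move/level_char => [k' [j [k0 E]]]; exists j => //.
    by rewrite E; congr c; apply: val_inj.
  by case=> j _ ->; apply/level_char; exists ord0, j.
rewrite card_in_imset ?cardsT ?card_ord //.
by move=> i j _ _ /inj[].
Qed.

Lemma below1 (k1 : 'I_h.+1) j : (k1 : nat) = 1%N -> nice_whole (T:=T) ->
  exists2 i, i != j & c ord0 i < c k1 j.
Proof.
move=> k11 nice.
have lt : c ord0 j < c k1 j by apply: chain; rewrite k11.
have [_ [z [zlt zn]]] := nice _ _ lt.
have [k'' [i E]] := surj z; subst z.
have k0 : k'' = ord0 by apply: val_inj => /=; move: (idx_lt zlt); rewrite k11; case: (k'' : nat).
subst k''; exists i => //; apply/negP => /eqP eij; subst i.
by rewrite lexx in zn.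
Qed.
End N2.

Section Good.
Context {d : Order.disp_t} {T : finPOrderType d}.

Definition good (P : {set T}) : Prop :=
  [/\ #|level P 0| = 3%N,
      (forall x, x \in P -> x \notin level P 0 -> exists m1 m2,
          [/\ m1 \in level P 0, m2 \in level P 0, m1 != m2, m1 < x & m2 < x]),
      (forall x y, x \in level P 1 -> y \in level P 1 -> x != y ->
          exists2 m, m \in level P 0 & (m < x) && (m < y)) &
      (forall x m, x \in P -> x \notin level P 0 -> x \notin level P 1 ->
          m \in level P 0 -> m < x)].

Lemma good_lower : in_N2 (T:=T) -> good (lower_segment (T:=T)).
Proof.
case=> h [c [[[h1 hT surj inj] [chain anti _ _]] h2 nice hor]].
set P := lower_segment.
have Pdef : forall x, x \in P <-> exists k, (k <= h.-1)%N /\ x \in level [set:T] k.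
  move=> x; rewrite /P /lower_segment hT in_segment; split.
    by case=> k [_ ? ?]; exists k.
  by case=> k [? ?]; exists k.
have dc : forall x y, x \in P -> y \in [set: T] -> y < x -> y \in P.
  move=> x y /Pdef[k [kh xk]] _ yx.
  have [k' _ yk'] := in_some_level (in_setT y).
  apply/Pdef; exists k'; split => //.
  exact: leq_trans (ltnW (level_lt xk yk' yx)) kh.
have lvl : forall k, level P k = P :&: level [set:T] k.
  by move=> k; apply: level_down; [apply: subsetT|exact: dc].
have sub : forall k, (k <= h.-1)%N -> level [set:T] k \subset P.
  by move=> k kh; apply/subsetP => x xk; apply/Pdef; exists k.
have L0 : level P 0 = level [set:T] 0 by rewrite lvl; apply/setIidPr; apply: sub.
have L1 : level P 1 = level [set:T] 1.
  by rewrite lvl; apply/setIidPr; apply: sub; move: h2; case: (h) => [|[|h']].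
have LC := level_char surj chain anti.
have up : forall x, x \in P -> x \notin level P 0 -> x \notin level P 1 ->
    exists k, (2 <= k)%N /\ x \in level [set:T] k.
  move=> x xP n0 n1; have [k _ xk] := in_some_level (in_setT x); exists k; split => //.
  by case: k xk => [|[|k]] // xk; [rewrite L0 xk in n0|rewrite L1 xk in n1].
have o1 : (1 < 3)%N by [].
have c0in : forall j, c ord0 j \in level P 0 by move=> j; rewrite L0; apply/LC; exists ord0, j.
have c0ne : forall i j, i != j -> c ord0 i != c ord0 j.
  by move=> i j ij; apply/negP => /eqP /inj [_ e]; rewrite e eqxx in ij.
split.
- by rewrite L0; apply: card_L0 surj inj chain anti.
- move=> x xP n0; case: (boolP (x \in level P 1)) => x1; last first.
    have [k [k2 xk]] := up x xP n0 x1.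
    exists (c ord0 ord0), (c ord0 (Ordinal o1)); split => //; try exact: c0in.
    + by apply: c0ne.
    + by apply: (hor 0 k k2) => //; rewrite -L0; apply: c0in.
    + by apply: (hor 0 k k2) => //; rewrite -L0; apply: c0in.
  move: x1; rewrite L1 => /LC[k1 [j [k11 E]]]; subst x.
  have [i ij lt] := below1 surj chain anti j k11 nice.
  exists (c ord0 j), (c ord0 i); split => //; try exact: c0in.
    by rewrite eq_sym; apply: c0ne.
  by apply: chain; rewrite k11.
- move=> x y; rewrite L1 => /LC[k1 [j [k11 E]]] /LC[k1' [j' [k11' E']]]; subst x y.
  have ek : k1' = k1 by apply: val_inj; rewrite /= k11 k11'.
  subst k1' => xy.
  have jj : j != j' by apply/negP => /eqP e; rewrite e eqxx in xy.
  have [i ij lt] := below1 surj chain anti j k11 nice.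
  have [i' ij' lt'] := below1 surj chain anti j' k11 nice.
  have ch : forall j0, c ord0 j0 < c k1 j0 by move=> j0; apply: chain; rewrite k11.
  case/or3P: (I3 ij ij' jj) => /eqP e.
  + by exists (c ord0 i) => //; rewrite lt /= e ch.
  + by exists (c ord0 i') => //; rewrite lt' andbT e ch.
  + by exists (c ord0 i) => //; rewrite lt /= e lt'.
- move=> x m xP n0 n1 m0; have [k [k2 xk]] := up x xP n0 n1.
  by apply: (hor 0 k k2) => //; rewrite -L0.
Qed.
End Good.
Set Implicit Arguments. Unset Strict Implicit. Unset Printing Implicit Defensive.
Import Order.TTheory.
Local Open Scope order_scope.

Section Card3.
Context {T : finType}.
Lemma card3 (A : {set T}) x y z m : #|A| = 3%N -> x \in A -> y \in A -> z \in A ->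
  x != y -> x != z -> y != z -> m \in A -> [|| m == x, m == y | m == z].
Proof.
move=> cA xA yA zA xy xz yz mA.
have E : [set x; y; z] = A.
  apply/eqP; rewrite eqEcard; apply/andP; split.
    by apply/subsetP => t; rewrite !inE => /orP[/orP[]|] /eqP->.
  have -> : [set x; y; z] = x |: (y |: [set z]) by apply/setP => t; rewrite !inE orbA.
  by rewrite cA !cardsU1 cards1 !inE negb_or xy xz yz.
by move: mA; rewrite -E !inE -orbA.
Qed.

Lemma card3_third (A : {set T}) x y : #|A| = 3%N -> x \in A -> y \in A -> x != y ->
  exists2 z, z \in A & (z != x) && (z != y).
Proof.
move=> cA xA yA xy.
case: (set_0Vmem (A :\: [set x; y])) => [E|[z]]; last first.
  by rewrite !inE negb_or => /andP[/andP[zx zy] zA]; exists z => //; rewrite zx zy.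
have : A \subset [set x; y].
  apply/subsetP => t tA; apply/negPn/negP => tn.
  have : t \in A :\: [set x; y] by rewrite inE tn tA.
  by rewrite E inE.
move/subset_leq_card; rewrite cA cards2; by case: (x == y).
Qed.
End Card3.

Section Main.
Context {d : Order.disp_t} {T : finPOrderType d}.
Variables (P : {set T}) (r : T -> T).
Hypotheses (gP : good P) (hr : retraction_on P r).
Let R := r @: P.
Hypothesis ha : antichain (level R 0).

Let P0 := level P 0.
Let P1 := level P 1.

Lemma rP x : x \in P -> r x \in P. Proof. by case: hr => H _ _; apply: H. Qed.
Lemma rmono x y : x \in P -> y \in P -> x <= y -> r x <= r y.
Proof. by case: hr => _ H _; apply: H. Qed.
Lemma ridem x : x \in P -> r (r x) = r x. Proof. by case: hr => _ _ H; apply: H. Qed.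
Lemma inR x : x \in P -> r x \in R. Proof. by move=> xP; apply: imset_f. Qed.
Lemma RP y : y \in R -> y \in P. Proof. by case/imsetP => x xP ->; apply: rP. Qed.
Lemma Rfix y : y \in R -> r y = y. Proof. by case/imsetP => x xP ->; apply: ridem. Qed.
Lemma R0R y : y \in level R 0 -> y \in R. Proof. exact: in_level. Qed.
Lemma P0P y : y \in P0 -> y \in P. Proof. exact: in_level. Qed.
Lemma P1P y : y \in P1 -> y \in P. Proof. exact: in_level. Qed.

Lemma R0le x y : x \in level R 0 -> y \in level R 0 -> x <= y -> x = y.
Proof.
move=> x0 y0 xy; case: (eqVneq x y) => // nxy.
by move: (ha x0 y0 nxy); rewrite (le_comparable xy).
Qed.

Lemma below_R0 y z : y \in R -> z \in level R 0 -> y <= z -> y = z.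
Proof. by move=> yR z0; apply: min_le z0 yR. Qed.

Lemma le_r x y : x \in P -> y \in R -> x <= y -> r x <= y.
Proof. by move=> xP yR xy; have := rmono xP (RP yR) xy; rewrite (Rfix yR). Qed.

Lemma P0_R0 m : m \in P0 -> m \in R -> m \in level R 0.
Proof.
move=> /minimalsP[mP H] mR; apply/minimalsP; split => // y yR.
exact: H (RP yR).
Qed.

Lemma P01 x : x \in P0 -> x \in P1 -> False.
Proof. by move=> h0 h1; have := level_disj h0 h1. Qed.

Lemma P0below x : x \in P -> exists2 m, m \in P0 & m <= x.
Proof. exact: exists_below. Qed.

Lemma P0le x m : x \in P -> m \in P0 -> x <= m -> x = m.
Proof. by move=> xP m0; apply: min_le m0 xP. Qed.

Section AB.
Variables a b : T.
Hypotheses (hab : level R 0 = [set a; b]) (nab : a != b).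

Lemma a0 : a \in level R 0. Proof. by rewrite hab !inE eqxx. Qed.
Lemma b0 : b \in level R 0. Proof. by rewrite hab !inE eqxx orbT. Qed.
Lemma aR : a \in R. Proof. exact: R0R a0. Qed.
Lemma bR : b \in R. Proof. exact: R0R b0. Qed.
Lemma nleab : ~~ (a <= b).
Proof. by apply/negP => /(R0le a0 b0) e; move: nab; rewrite e eqxx. Qed.
Lemma nleba : ~~ (b <= a).
Proof. by apply/negP => /(R0le b0 a0) e; move: nab; rewrite e eqxx. Qed.

Lemma a_low : a \in P0 \/ a \in P1.
Proof.
case: gP => _ _ _ G4.
case: (boolP (a \in P0)) => a0'; first by left.
case: (boolP (a \in P1)) => a1'; first by right.
have [m m0 mb] := P0below (RP bR).
have rmb : r m = b.
  apply: below_R0 b0 _; first exact: inR (P0P m0).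
  exact: le_r (P0P m0) bR mb.
have rma : r m = a.
  apply: below_R0 a0 _; first exact: inR (P0P m0).
  exact: le_r (P0P m0) aR (ltW (G4 a m (RP aR) a0' a1' m0)).
by move: nab; rewrite -rma rmb eqxx.
Qed.

Lemma not_both1 : a \in P1 -> b \in P1 -> False.
Proof.
case: gP => _ _ G3 _ a1 b1.
have [m m0 /andP[ma mb]] := G3 a b a1 b1 nab.
have rmb : r m = b.
  apply: below_R0 b0 _; first exact: inR (P0P m0).
  exact: le_r (P0P m0) bR (ltW mb).
have rma : r m = a.
  apply: below_R0 a0 _; first exact: inR (P0P m0).
  exact: le_r (P0P m0) aR (ltW ma).
by move: nab; rewrite -rma rmb eqxx.
Qed.
End AB.

Definition concl2 := exists s : T -> T,
  [/\ retraction_on P s, iso_sub (s @: P) R,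
      level (s @: P) 0 \subset level P 0,
      s @: level P 0 = level (s @: P) 0 &
      exists2 p, p \in level (s @: P) 0 & [set x in P | s x == p] = [set p]].

Lemma iso_refl (A : {set T}) : iso_sub A A.
Proof. exists id; split; [by move=> x y _ _|by rewrite imset_id|by []]. Qed.

Section CaseB.
Variables a b m1 m2 : T.
Hypotheses (hab : level R 0 = [set a; b]) (nab : a != b)
  (aP0 : a \in P0) (bP1 : b \in P1)
  (m10 : m1 \in P0) (m20 : m2 \in P0) (m12 : m1 != m2) (m1b : m1 < b) (m2b : m2 < b).

Let a0 := a0 hab. Let b0 := b0 hab. Let aR := aR hab. Let bR := bR hab.
Let nleab := nleab hab nab. Let nleba := nleba hab nab.

Lemma B1 m : m \in P0 -> m < b -> r m = b.
Proof. move=> m0 mb; apply: below_R0 b0 _; [exact: inR (P0P m0)|exact: le_r (P0P m0) bR (ltW mb)]. Qed.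

Lemma mna m : m < b -> m != a.
Proof. by move=> mb; apply/negP => /eqP e; move: nleab; rewrite -e (ltW mb). Qed.

Lemma B0 m : m \in P0 -> m = a \/ r m = b.
Proof.
case: gP => G1 _ _ _ m0.
have am1 : a != m1 by rewrite eq_sym (mna m1b).
have am2 : a != m2 by rewrite eq_sym (mna m2b).
case/or3P: (card3 G1 aP0 m10 m20 am1 am2 m12 m0) => /eqP ->;
  [by left|right; exact: B1|right; exact: B1].
Qed.

Lemma B2 y : y \in R -> y \in P1 -> y = b.
Proof.
case: gP => _ _ G3 _ yR y1; case: (eqVneq y b) => // yb.
have [n n0 /andP[ny nb]] := G3 y b y1 bP1 yb.
have := le_r (P0P n0) yR (ltW ny); rewrite (B1 n0 nb) le_eqVlt eq_sym (negbTE yb) /=.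
by move=> lt; move: (level_same_nlt y1 bP1); rewrite lt.
Qed.

Lemma B3 y : y \in R -> y \in P0 -> y = a.
Proof.
move=> yR y0; have := P0_R0 y0 yR; rewrite hab !inE => /orP[/eqP//|/eqP e].
by subst y; case: (P01 y0 bP1).
Qed.

Lemma Bup x : x \in P -> x \notin P0 -> x \notin P1 -> (r x != a) && (r x != b).
Proof.
case: gP => _ _ _ G4 xP x0 x1.
have h1 : b <= r x by rewrite -(B1 m10 m1b); apply: rmono (P0P m10) xP (ltW (G4 _ _ xP x0 x1 m10)).
have h2 : a <= r x by rewrite -(Rfix aR); apply: rmono (RP aR) xP (ltW (G4 _ _ xP x0 x1 aP0)).
apply/andP; split; apply/negP => /eqP e; rewrite e in h1 h2.
  by move: nleba; rewrite h1.
by move: nleab; rewrite h2.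
Qed.

Lemma Rup y : y \in R -> y != a -> y != b -> (y \notin P0) && (y \notin P1).
Proof.
move=> yR ya yb; apply/andP; split; apply/negP.
  by move/(B3 yR) => e; rewrite e eqxx in ya.
by move/(B2 yR) => e; rewrite e eqxx in yb.
Qed.

Lemma B1c : (2 <= height P)%N ->
  (1 <= height R)%N /\ is_retract (segment P 2 (height P)) (segment R 1 (height R)).
Proof.
move=> h2.
have [x xh] := height_level (ltnW h2).
have xP := in_level xh.
have x0 : x \notin P0.
  by apply/negP => x0; have := level_disj xh x0; move=> e; rewrite e in h2.
have x1 : x \notin P1.
  by apply/negP => x1; have := level_disj xh x1; move=> e; rewrite e in h2.
have /andP[ra rb] := Bup xP x0 x1.
split.
  have [k _ xk] := in_some_level (inR xP).
  apply: leq_trans (level_height xk); case: k xk => // xk.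
  by move: xk; rewrite hab !inE (negbTE ra) (negbTE rb).
exists r; split; last first.
  rewrite seg1 seg2; apply/setP => y; apply/idP/imsetP.
    rewrite in_setD hab !inE negb_or => /andP[/andP[ya yb] yR].
    exists y; last by rewrite Rfix.
    have /andP[y0 y1] := Rup yR ya yb.
    by rewrite in_setD in_setU negb_or y0 y1 (RP yR).
  case=> z; rewrite in_setD in_setU negb_or => /andP[/andP[z0 z1] zP] ->.
  have /andP[za zb] := Bup zP z0 z1.
  by rewrite in_setD hab !inE negb_or za zb inR.
rewrite seg2; split.
- move=> z; rewrite in_setD in_setU negb_or => /andP[/andP[z0 z1] zP].
  have /andP[za zb] := Bup zP z0 z1.
  have /andP[y0 y1] := Rup (inR zP) za zb.
  by rewrite in_setD in_setU negb_or y0 y1 rP.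
- move=> z y; rewrite !in_setD => /andP[_ zP] /andP[_ yP]; exact: rmono.
- move=> z; rewrite in_setD => /andP[_ zP]; exact: ridem.
Qed.

Let s := fun x => if r x == b then m1 else r x.

Lemma m1nb : m1 != b. Proof. by rewrite lt_eqF. Qed.
Lemma m1notR : m1 \notin R.
Proof. by apply/negP => /B3 /(_ m10) e; move: (mna m1b); rewrite e eqxx. Qed.
Lemma sm1 : s m1 = m1. Proof. by rewrite /s (B1 m10 m1b) eqxx. Qed.
Lemma sa : s a = a. Proof. by rewrite /s (Rfix aR) (negbTE nab). Qed.
Lemma sP x : x \in P -> s x \in P.
Proof. by move=> xP; rewrite /s; case: eqP => _; [exact: P0P|exact: rP]. Qed.
Lemma Sfacts y : y \in s @: P -> y = m1 \/ (y \in R /\ y != b).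
Proof.
case/imsetP => x xP ->; rewrite /s; case: eqVneq => e; first by left.
by right; split => //; exact: inR.
Qed.
Lemma S_m1 : m1 \in s @: P. Proof. by rewrite -sm1 imset_f // P0P. Qed.
Lemma S_a : a \in s @: P. Proof. by rewrite -sa imset_f // P0P. Qed.
Lemma S_R y : y \in R -> y != b -> y \in s @: P.
Proof. by move=> yR yb; apply/imsetP; exists y; [exact: RP|rewrite /s (Rfix yR) (negbTE yb)]. Qed.
Lemma SP y : y \in s @: P -> y \in P.
Proof. by case/imsetP => x xP ->; exact: sP. Qed.

Lemma up_m1 y : y \in R -> y != a -> y != b -> m1 < y.
Proof.
case: gP => _ _ _ G4 yR ya yb; have /andP[y0 y1] := Rup yR ya yb.
exact: G4 (RP yR) y0 y1 m10.
Qed.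

Lemma LS : level (s @: P) 0 = [set a; m1].
Proof.
apply/setP => y; rewrite /level /=; apply/minimalsP/idP.
  case=> yS H; case: (Sfacts yS) => [->|[yR yb]]; first by rewrite !inE eqxx orbT.
  case: (eqVneq y a) => [->|ya]; first by rewrite !inE eqxx.
  by move: (H _ S_m1); rewrite up_m1.
rewrite !inE => /orP[]/eqP ->; split; try (exact: S_a); try (exact: S_m1);
  move=> z /SP zP; apply: min_nlt zP => //.
Qed.

Lemma B2c : concl2.
Proof.
case: gP => G1 G2 _ G4.
exists s; split.
- split.
  + exact: sP.
  + move=> x y xP yP xy; rewrite /s.
    case: (eqVneq (r x) b) => ex; case: (eqVneq (r y) b) => ey //.
    * have by_ : b <= r y by rewrite -ex; exact: rmono.
      have ya : r y != a by apply/negP => /eqP e; move: nleba; rewrite -e by_.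
      exact: ltW (up_m1 (inR yP) ya ey).
    * have : r x <= b by rewrite -ey; exact: rmono.
      by move/(below_R0 (inR xP) b0) => e; move: ex; rewrite e eqxx.
    * exact: rmono.
  + move=> x xP; rewrite /s; case: (eqVneq (r x) b) => ex.
      by rewrite (B1 m10 m1b) eqxx.
    by rewrite (ridem xP) (negbTE ex).
- exists (fun x => if x == m1 then b else x); split.
  + move=> x y xS yS /=.
    case: (eqVneq x m1) => ex; case: (eqVneq y m1) => ey //; try by subst.
      move=> e; subst y; case: (Sfacts yS) => [e|[_]]; last by rewrite eqxx.
      by move: m1nb; rewrite e eqxx.
    move=> e; subst x; case: (Sfacts xS) => [e|[_]]; last by rewrite eqxx.
    by move: m1nb; rewrite e eqxx.
  + apply/setP => y; apply/imsetP/idP.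
      case=> x xS ->; case: (eqVneq x m1) => ex; first exact: bR.
      by case: (Sfacts xS) => [e|[]//]; move: ex; rewrite e eqxx.
    move=> yR; case: (eqVneq y b) => yb.
      by exists m1; [exact: S_m1|rewrite eqxx yb].
    exists y; first exact: S_R.
    case: (eqVneq y m1) => // e; by move: m1notR; rewrite -e yR.
  + move=> x y xS yS /=.
    case: (eqVneq x m1) => ex; case: (eqVneq y m1) => ey.
    * by subst; rewrite !lexx.
    * subst x; case: (Sfacts yS) => [e|[yR yb]]; first by move: ey; rewrite e eqxx.
      case: (eqVneq y a) => [e|ya].
        subst y; rewrite (negbTE nleba); apply/esym/negP => /(P0le (P0P m10) aP0) e.
        by move: (mna m1b); rewrite e eqxx.
      have lt := up_m1 yR ya yb.
      rewrite (ltW lt); have := le_r (P0P m10) yR (ltW lt).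
      by rewrite (B1 m10 m1b) => ->.
    * subst y; case: (Sfacts xS) => [e|[xR xb]]; first by move: ex; rewrite e eqxx.
      apply/idP/idP.
        by move/(below_R0 xR b0) => e; move: xb; rewrite e eqxx.
      by move/(P0le (RP xR) m10) => e; move: ex; rewrite e eqxx.
    * by [].
- by rewrite LS; apply/subsetP => y /setU1P[->|/set1P->]; [exact: aP0|exact: m10].
- rewrite LS; apply/setP => y; apply/imsetP/idP.
    case=> m m0 ->; case: (B0 m0) => [->|e].
      by rewrite sa !inE eqxx.
    by rewrite /s e eqxx !inE eqxx orbT.
  rewrite !inE => /orP[]/eqP ->.
    by exists a => //; rewrite sa.
  by exists m1 => //; rewrite sm1.
- exists a; first by rewrite LS !inE eqxx.
  apply/setP => x; rewrite !inE; apply/andP/eqP.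
    case=> xP /eqP; rewrite /s; case: (eqVneq (r x) b) => e sx.
      by move: (mna m1b); rewrite sx eqxx.
    case: (boolP (x \in P0)) => x0.
      by case: (B0 x0) => // e'; move: e; rewrite e' eqxx.
    have [n1 [n2 [n10 n20 n12 n1x n2x]]] := G2 x xP x0.
    have rn : forall n, n \in P0 -> n < x -> n = a.
      move=> n n0 nx; have rna : r n = a.
        apply: below_R0 (inR (P0P n0)) a0 _; rewrite -sx; exact: rmono (P0P n0) xP (ltW nx).
      case: (B0 n0) => // e'; by move: nab; rewrite -rna e' eqxx.
    by move: n12; rewrite (rn n1 n10 n1x) (rn n2 n20 n2x) eqxx.
  move=> ->; split; [exact: P0P|by rewrite sa].
Qed.
End CaseB.

Section CaseA.
Variables a b c : T.
Hypotheses (hab : level R 0 = [set a; b]) (nab : a != b)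
  (aP0 : a \in P0) (bP0 : b \in P0) (cP0 : c \in P0) (ca : c != a) (cb : c != b).

Let a0 := a0 hab. Let b0 := b0 hab. Let aR := aR hab. Let bR := bR hab.

Lemma P0abc m : m \in P0 -> [|| m == a, m == b | m == c].
Proof.
case: gP => G1 _ _ _; apply: card3 G1 aP0 bP0 cP0 nab _ _.
  by rewrite eq_sym.
by rewrite eq_sym.
Qed.

Lemma cnotR : c \notin R.
Proof.
apply/negP => cR; have := P0_R0 cP0 cR; rewrite hab !inE.
by rewrite (negbTE ca) (negbTE cb).
Qed.

Let v := if a <= r c then a else b.
Let p := if a <= r c then b else a.

Lemma v0 : v \in level R 0. Proof. by rewrite /v; case: ifP. Qed.
Lemma p0 : p \in level R 0. Proof. by rewrite /p; case: ifP. Qed.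
Lemma vp : v != p. Proof. by rewrite /v /p; case: ifP => _ //; rewrite eq_sym. Qed.
Lemma vle : v <= r c.
Proof.
rewrite /v; case: ifP => // h.
have [n nR nle] := exists_below (inR (P0P cP0)).
have : n \in level R 0 by [].
rewrite hab !inE => /orP[]/eqP e; subst n => //.
by rewrite nle in h.
Qed.
Lemma vR : v \in R. Proof. exact: R0R v0. Qed.
Lemma pR : p \in R. Proof. exact: R0R p0. Qed.
Lemma neqc y : y \in R -> y != c.
Proof. by move=> yR; apply/negP => /eqP e; move: cnotR; rewrite -e yR. Qed.

Let s := fun x => if x == c then v else r x.

Lemma SR : s @: P = R.
Proof.
apply/setP => y; apply/imsetP/idP.
  case=> x xP ->; rewrite /s; case: eqP => _; [exact: vR|exact: inR].
move=> yR; exists y; first exact: RP.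
by rewrite /s (negbTE (neqc yR)) (Rfix yR).
Qed.

Lemma sR y : y \in R -> s y = y.
Proof. by move=> yR; rewrite /s (negbTE (neqc yR)) (Rfix yR). Qed.

Lemma A2c : concl2.
Proof.
case: gP => G1 G2 _ G4.
exists s; rewrite SR; split.
- split.
  + move=> x xP; rewrite /s; case: eqP => _; [exact: RP vR|exact: rP].
  + move=> x y xP yP xy; rewrite /s.
    case: (eqVneq x c) => ex; case: (eqVneq y c) => ey //.
    * subst x; exact: le_trans vle (rmono (P0P cP0) yP xy).
    * by subst y; move: ex; rewrite (P0le xP cP0 xy) eqxx.
    * exact: rmono.
  + move=> x xP; case: (eqVneq x c) => ex.
      by subst x; rewrite /s eqxx (negbTE (neqc vR)) (Rfix vR).
    have -> : s x = r x by rewrite /s (negbTE ex).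
    exact: sR (inR xP).
- exact: iso_refl.
- by rewrite hab; apply/subsetP => y /setU1P[->|/set1P->].
- rewrite hab; apply/setP => y; apply/imsetP/idP.
    case=> m m0 ->; case/or3P: (P0abc m0) => /eqP ->.
    + by rewrite sR // !inE eqxx.
    + by rewrite sR // !inE eqxx orbT.
    + by rewrite /s eqxx /v; case: ifP; rewrite !inE eqxx ?orbT.
  rewrite !inE => /orP[]/eqP ->.
    by exists a => //; rewrite sR.
  by exists b => //; rewrite sR.
- exists p; first exact: p0.
  apply/setP => x; rewrite !inE; apply/andP/eqP.
    case=> xP /eqP; rewrite /s; case: (eqVneq x c) => ex sx.
      by move: vp; rewrite sx eqxx.
    case: (boolP (x \in P0)) => x0.
      case/or3P: (P0abc x0) => /eqP e; subst x.
      + by rewrite (Rfix aR) in sx.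
      + by rewrite (Rfix bR) in sx.
      + by rewrite eqxx in ex.
    have [n1 [n2 [n10 n20 n12 n1x n2x]]] := G2 x xP x0.
    have rn : forall n, n \in P0 -> n < x -> n = p.
      move=> n n0 nx; have le : r n <= p by rewrite -sx; exact: rmono (P0P n0) xP (ltW nx).
      case/or3P: (P0abc n0) => /eqP e; subst n.
      + by apply: R0le a0 p0 _; rewrite -{1}(Rfix aR).
      + by apply: R0le b0 p0 _; rewrite -{1}(Rfix bR).
      + have := R0le v0 p0 (le_trans vle le) => e; by move: vp; rewrite e eqxx.
    by move: n12; rewrite (rn n1 n10 n1x) (rn n2 n20 n2x) eqxx.
  move=> ->; split; [exact: RP pR|by rewrite (sR pR)].
Qed.
End CaseA.
End Main.
Unset Implicit Arguments.
Import Order.TTheory.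
Local Open Scope order_scope.

Theorem lemma4p4 (d : Order.disp_t) (T : finPOrderType d)
  (r : T -> T) :
  let P := @lower_segment d T in
  let R := r @: P in
  in_N2 (T := T) ->
  (2 <= height P)%N ->
  retraction_on P r ->
  #|level R 0| = 2 -> antichain (level R 0) ->
  (* (1) *)
  [/\ level R 0 \subset level P 0 :|: level P 1,
      level R 0 :&: level P 0 != set0 &
      (level R 0 :&: level P 1 != set0 ->
         (1 <= height R)%N /\
         is_retract (segment P 2 (height P)) (segment R 1 (height R)))]
  /\
  (* (2) *)
  (exists s : T -> T,
     let S := s @: P in
     [/\ retraction_on P s, iso_sub S R,
         level S 0 \subset level P 0,
         s @: level P 0 = level S 0 &
         exists2 p, p \in level S 0 & [set x in P | s x == p] = [set p]]).
Proof.
move=> P R hN h2 hr hc ha.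
have gP : good P := good_lower hN.
move/eqP/cards2P: hc => [a [b [nab hab]]].
have hba : level R 0 = [set b; a] by rewrite hab setUC.
have nba : b != a by rewrite eq_sym.
have la := a_low gP hr hab nab.
have lb := a_low gP hr hba nba.
have nb1 := not_both1 gP hr hab nab.
have getm : forall x, x \in level P 1 -> exists m1 m2,
    [/\ m1 \in level P 0, m2 \in level P 0, m1 != m2, m1 < x & m2 < x].
  move=> x x1; case: gP => _ G2 _ _; apply: G2; first exact: in_level x1.
  by apply/negP => x0; exact: P01 x0 x1.
split.
- split.
  + apply/subsetP => y; rewrite hab => /setU1P[->|/set1P->]; rewrite in_setU.
      by case: la => ->; rewrite ?orbT.
    by case: lb => ->; rewrite ?orbT.
  + case: la => a0.
      by apply/set0Pn; exists a; rewrite in_setI a0 hab !inE eqxx.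
    case: lb => b0.
      by apply/set0Pn; exists b; rewrite in_setI b0 hab !inE eqxx orbT.
    by case: (nb1 a0 b0).
  + move=> /set0Pn[z]; rewrite in_setI hab => /andP[/setU1P[->|/set1P->] z1].
      have b0 : b \in level P 0 by case: lb => // b1; case: (nb1 z1 b1).
      have [m1 [m2 [m10 m20 m12 m1a m2a]]] := getm a z1.
      by have X := B1c gP hr ha hba nba b0 z1 m10 m1a h2; exact: X.
    have a0 : a \in level P 0 by case: la => // a1; case: (nb1 a1 z1).
    have [m1 [m2 [m10 m20 m12 m1b m2b]]] := getm b z1.
    by have X := B1c gP hr ha hab nab a0 z1 m10 m1b h2; exact: X.
- have C : concl2 P r; last exact: C.
  case: la => a0; case: lb => b0.
  + have [G1 _ _ _] := gP.
    have [c c0 /andP[ca cb]] := card3_third G1 a0 b0 nab.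
    by have X := A2c gP hr ha hab nab a0 b0 c0 ca cb; exact: X.
  + have [m1 [m2 [m10 m20 m12 m1b m2b]]] := getm b b0.
    by have X := B2c gP hr ha hab nab a0 b0 m10 m20 m12 m1b m2b; exact: X.
  + have [m1 [m2 [m10 m20 m12 m1a m2a]]] := getm a a0.
    by have X := B2c gP hr ha hba nba b0 a0 m10 m20 m12 m1a m2a; exact: X.
  + by case: (nb1 a0 b0).
Qed.
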